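(* In the setting described in the context, $\sum_{i=1}^{m-1} L_1(\overline{p}_i,\overline{q}_i)\le 4\cdot L_1(p_1',t)$, where $p_1'$ is the vertical projection of $p_1$ onto $\ell_t^-$ and $L_1$ denotes the $L_1$ distance.
   Context: $P$ is a finite set of points in the plane, $s,t\in P$ distinct, and coordinates are chosen so that $t=(0,0)$ and $s$ lies in $C_2^t$ below the line $\ell_t^-=\{x+y=0\}$. Cones: $C_0^v=\{x\ge v_x,y\le v_y\}$, $C_1^v=\{x\ge v_x,y\ge v_y\}$, $C_2^v=\{x\le v_x,y\ge v_y\}$, $C_3^v=\{x\le v_x,y\le v_y\}$ with bisector directions $(1,-1),(1,1),(-1,1),(-1,-1)$. The $\Theta_4$-graph of $P$ has, for each $v\in P$ and cone $C_i^v$ containing a point of $P\setminus\{v\}$, a directed edge from $v$ to a point $w$ of $(P\setminus\{v\})\cap C_i^v$ minimizing the projection of $w-v$ onto the bisector direction (the neighbour of $v$ in $C_i^v$). For a point $p$, $\ell_p^+$ is the line through $p$ of slope $+1$, and $\overline{p}$ denotes the intersection point of $\ell_t^-$ and $\ell_p^+$. Algorithm: for a vertex $v$, let $T(v,\ell_t^-)=C_1^v\cap\{x+y\le0\}$ if $v_x+v_y<0$, $T(v,\ell_t^-)=C_3^v\cap\{x+y\ge0\}$ if $v_x+v_y>0$, and $\{v\}$ if $v_x+v_y=0$; $v$ is clean if $T(v,\ell_t^-)$ contains no point of $P$ other than $v$. Starting at $v=s$, while $v\ne t$: if $v$ is not clean, take a sweeping step (go to the neighbour of $v$ in $C_1^v$,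 resp. $C_3^v$); otherwise take a greedy step (go to the neighbour of $v$ in the cone $C_i^v$ containing $t$). Let $(p_1,q_1),\dots,(p_{m-1},q_{m-1})$ be, in order, the edges traversed by greedy steps, and set $p_m=t$. *)

(* Defs.v *)
From HB Require Import structures.
From mathcomp Require Import all_boot all_order all_algebra.
Set Implicit Arguments. Unset Strict Implicit. Unset Printing Implicit Defensive.
Import Order.TTheory GRing.Theory Num.Theory.
Local Open Scope ring_scope.

Section Theta4.
Variable R : realFieldType.
Notation pt := (R * R)%type.

Definition L1 (a b : pt) : R := `|a.1 - b.1| + `|a.2 - b.2|.

Definition inC (i : nat) (v w : pt) : bool :=
  match i with
  | 0%N => (v.1 <= w.1) && (w.2 <= v.2)
  | 1%N => (v.1 <= w.1) && (v.2 <= w.2)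
  | 2%N => (w.1 <= v.1) && (v.2 <= w.2)
  | _ => (w.1 <= v.1) && (w.2 <= v.2)
  end.

(* projection of w - v onto the bisector direction of C_i
   (directions (1,-1),(1,1),(-1,1),(-1,-1), unnormalised: same minimisers) *)
Definition bproj (i : nat) (v w : pt) : R :=
  match i with
  | 0%N => (w.1 - v.1) - (w.2 - v.2)
  | 1%N => (w.1 - v.1) + (w.2 - v.2)
  | 2%N => - (w.1 - v.1) + (w.2 - v.2)
  | _ => - (w.1 - v.1) - (w.2 - v.2)
  end.

Definition is_nb (P : seq pt) (v : pt) (i : nat) (w : pt) : Prop :=
  [/\ w \in P, w != v, inC i v w &
      forall u, u \in P -> u != v -> inC i v u -> bproj i v w <= bproj i v u].

Definition theta4_graph (P : seq pt) (nb : pt -> nat -> pt) : Prop :=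
  forall v i, v \in P -> (i < 4)%N ->
    (exists u, [/\ u \in P, u != v & inC i v u]) -> is_nb P v i (nb v i).

(* T(v, l_t^-) with t = (0,0) and l_t^- = {x + y = 0} *)
Definition inT (v w : pt) : bool :=
  if v.1 + v.2 < 0 then [&& v.1 <= w.1, v.2 <= w.2 & w.1 + w.2 <= 0]
  else if 0 < v.1 + v.2 then [&& w.1 <= v.1, w.2 <= v.2 & 0 <= w.1 + w.2]
  else w == v.

Definition clean (P : seq pt) (v : pt) : bool :=
  all (fun w => inT v w ==> (w == v)) P.

Definition sweep_cone (v : pt) : nat := if v.1 + v.2 < 0 then 1%N else 3%N.

Definition alg_step (P : seq pt) (nb : pt -> nat -> pt) (t v w : pt) : Prop :=
  if ~~ clean P v then w = nb v (sweep_cone v)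
  else exists2 i, (i < 4)%N /\ inC i v t & w = nb v i.

(* \overline{p}: intersection of l_t^- = {x+y=0} and l_p^+ (slope +1 through p) *)
Definition bar (p : pt) : pt := ((p.1 - p.2) / 2, (p.2 - p.1) / 2).

Definition vproj (p : pt) : pt := (p.1, - p.1).

End Theta4.

(* Main.v *)
Require Import Defs.
From HB Require Import structures.
From mathcomp Require Import all_boot all_order all_algebra.
From mathcomp Require Import lra zify.
Import Order.TTheory GRing.Theory Num.Theory.
Local Open Scope ring_scope.

Section Proof.
Variable R : realFieldType.
Variables (P : seq (R * R)) (nb : R * R -> nat -> R * R).
Hypothesis tP : (0, 0) \in P.
Hypothesis Hg : theta4_graph P nb.

Definition negs (p : R * R) : bool := (p.1 <= 0) && (0 <= p.2).

Definition next (p : R * R) : R * R :=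
  if ~~ clean P p then nb p (sweep_cone p) else nb p (if negs p then 0%N else 2%N).

Definition GN (p w : R * R) : Prop :=
  [/\ p.1 <= 0 /\ 0 <= p.2, p.1 <= w.1, w.2 <= p.2, w.1 - w.2 <= 0 &
    forall u, u \in P -> u != p -> inC 0 p u -> w.1 - w.2 <= u.1 - u.2].
Definition GP (p w : R * R) : Prop :=
  [/\ p.2 <= 0 /\ 0 <= p.1, w.1 <= p.1, p.2 <= w.2, 0 <= w.1 - w.2 &
    forall u, u \in P -> u != p -> inC 2 p u -> u.1 - u.2 <= w.1 - w.2].
Definition SU (p w : R * R) : Prop :=
  [/\ p.1 + p.2 < 0, p.1 <= w.1, p.2 <= w.2 & w.1 + w.2 <= 0].
Definition SD (p w : R * R) : Prop :=
  [/\ 0 < p.1 + p.2, w.1 <= p.1, w.2 <= p.2 & 0 <= w.1 + w.2].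

Lemma step_facts p w : p \in P -> p != (0, 0) -> alg_step P nb (0, 0) p w ->
  [/\ w \in P, w != p, w = next p &
     if clean P p then (if negs p then GN p w else GP p w) else (SU p w \/ SD p w)].
Proof.
move=> pP pt; rewrite /alg_step /next.
case: (boolP (clean P p)) => Hc /=.
- case=> i [i4 iC] ->.
  have ne : exists u, [/\ u \in P, u != p & inC i p u].
    by exists (0, 0); split => //; rewrite eq_sym.
  have [wP wne wC wmin] := Hg p i pP i4 ne.
  have tne : (0, 0) != p by rewrite eq_sym.
  have tmin := wmin _ tP tne iC.
  have HT := allP Hc _ tP.
  clear ne; move: pt tne HT wmin wC iC tmin wne wP; case: p pP Hc => px py pP Hc.
  rewrite /negs /=.
  case: i i4 => [|[|[|[|i]]]] // _ pt tne HT wmin wC iC tmin wne wP.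
  + move: iC; rewrite /inC /= => /andP [h1 h2].
    rewrite h1 h2 /=; split => //.
    move: wC; rewrite /inC /= => /andP [h3 h4].
    move: tmin; rewrite /bproj /= => h5.
    split => //; first lra.
    move=> u uP une uC; have := wmin u uP une uC; rewrite /bproj /=; lra.
  + exfalso; move: iC; rewrite /inC /= => /andP [h1 h2].
    move: HT; rewrite /inT /=.
    case: ifP => Ha.
      by rewrite h1 h2 /= addr0 lexx /= (negbTE tne).
    case: ifP => Hb; first lra.
    move=> _; move/negP: pt; apply; apply/eqP; congr pair; lra.
  + move: iC; rewrite /inC /= => /andP [h1 h2].
    have -> : (px <= 0) && (0 <= py) = false.
      apply/negP => /andP [h3 h4]; move/negP: pt; apply; apply/eqP; congr pair; lra.
    split => //.
    move: wC; rewrite /inC /= => /andP [h3 h4].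
    move: tmin; rewrite /bproj /= => h5.
    split => //; first lra.
    move=> u uP une uC; have := wmin u uP une uC; rewrite /bproj /=; lra.
  + exfalso; move: iC; rewrite /inC /= => /andP [h1 h2].
    move: HT; rewrite /inT /=.
    case: ifP => Ha; first lra.
    case: ifP => Hb.
      by rewrite h1 h2 /= addr0 lexx /= (negbTE tne).
    move=> _; move/negP: pt; apply; apply/eqP; congr pair; lra.
- move=> ->.
  move: Hc; rewrite /clean => /allPn [u uP]; rewrite negb_imply => /andP [HT Hu].
  move: HT; rewrite /inT /sweep_cone.
  case: ifP => Ha.
  + move=> /and3P [h1 h2 h3].
    have ne : exists u0, [/\ u0 \in P, u0 != p & inC 1 p u0].
      by exists u; split => //; rewrite /inC h1 h2.
    have [wP wne wC wmin] := Hg p 1 pP (isT : (1 < 4)%N) ne.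
    have := wmin u uP Hu; rewrite /inC h1 h2 => /(_ isT); rewrite /bproj /= => hm.
    split => //; left; move: wC; rewrite /inC => /andP [h4 h5]; split => //; lra.
  + case: ifP => Hb.
    * move=> /and3P [h1 h2 h3].
      have ne : exists u0, [/\ u0 \in P, u0 != p & inC 3 p u0].
        by exists u; split => //; rewrite /inC h1 h2.
      have [wP wne wC wmin] := Hg p 3 pP (isT : (3 < 4)%N) ne.
      have := wmin u uP Hu; rewrite /inC h1 h2 => /(_ isT); rewrite /bproj /= => hm.
      split => //; right; move: wC; rewrite /inC => /andP [h4 h5]; split => //; lra.
    * by move=> /eqP E; rewrite E eqxx in Hu.
Qed.


Variables (k : nat) (v : nat -> R * R).
Hypothesis v0P : v 0%N \in P.
Hypothesis Hk : v k = (0, 0).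
Hypothesis Hne : forall j, (j < k)%N -> v j != (0, 0).
Hypothesis Hst : forall j, (j < k)%N -> alg_step P nb (0, 0) (v j) (v j.+1).

Lemma vP j : (j <= k)%N -> v j \in P.
Proof.
elim: j => [|j IH] // jk.
have jk' : (j < k)%N by [].
by have [] := step_facts (v j) (v j.+1) (IH (ltnW jk')) (Hne j jk') (Hst j jk').
Qed.

Lemma vstep j : (j < k)%N ->
  [/\ v j.+1 \in P, v j.+1 != v j, v j.+1 = next (v j) &
     if clean P (v j) then (if negs (v j) then GN (v j) (v j.+1) else GP (v j) (v j.+1))
     else (SU (v j) (v j.+1) \/ SD (v j) (v j.+1))].
Proof. by move=> jk; apply: step_facts; [apply: vP; apply: ltnW | apply: Hne | apply: Hst]. Qed.

Lemma vdistinct j n : (j < n)%N -> (n <= k)%N -> v j != v n.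
Proof.
move=> jn nk; apply/negP => /eqP E.
have H : forall m, (n + m <= k)%N -> v (j + m)%N = v (n + m)%N.
  elim=> [|m IH] hm; first by rewrite !addn0.
  have h1 : (n + m < k)%N by rewrite addnS in hm.
  have h2 : (j + m < k)%N by lia.
  have [_ _ e1 _] := vstep _ h1; have [_ _ e2 _] := vstep _ h2.
  by rewrite !addnS e1 e2 IH // ltnW.
have := H (k - n)%N; rewrite subnKC // => /(_ (leqnn k)); rewrite Hk => e.
have h : (j + (k - n) < k)%N.
  by lia.
by move: (Hne _ h); rewrite e eqxx.
Qed.


Definition inbox (r : R) (p : R * R) : Prop :=
  [/\ -r <= p.1, p.1 <= r, -r <= p.2 & p.2 <= r].

Lemma box_step j r : (j < k)%N -> inbox r (v j) -> inbox r (v j.+1).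
Proof.
move=> jk [h1 h2 h3 h4]; have [_ _ _] := vstep j jk.
case: ifP => _; [case: ifP => _|].
- by case=> [[a1 a2] b1 b2 b3 _]; split; lra.
- by case=> [[a1 a2] b1 b2 b3 _]; split; lra.
- by case=> [[a1 a2 a3 a4]|[a1 a2 a3 a4]]; split; lra.
Qed.

Lemma box_later j n r : (j <= n)%N -> (n <= k)%N -> inbox r (v j) -> inbox r (v n).
Proof.
move=> + + hb; elim: n => [|n IH] jn nk.
  by move: jn; rewrite leqn0 => /eqP <-.
move: jn; rewrite leq_eqVlt => /orP [/eqP <- //|jn].
by apply: box_step => //; apply: IH => //; apply: ltnW.
Qed.

Lemma key_neg j n : (j < n)%N -> (n < k)%N -> clean P (v j) -> negs (v j) ->
  ((v j).1 + (v j).2 <= 0) = ((v n).1 + (v n).2 <= 0) ->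
  (v j.+1).1 - (v j.+1).2 <= (v n).1 - (v n).2.
Proof.
move=> jn nk cj nj cls.
have jk : (j < k)%N by lia.
have [_ _ _] := vstep j jk; rewrite cj nj => -[[x0 y0] hx hy hb hmin].
have zP := vP n (ltnW nk).
have zne : v n != v j by rewrite eq_sym vdistinct // ltnW.
case: (boolP (inC 0 (v j) (v n))) => hC; first exact: hmin.
move: hC; rewrite /inC negb_and -!ltNge => hC.
have HT := allP cj _ zP; rewrite (negbTE zne) implybF /inT in HT.
case lo: ((v j).1 + (v j).2 <= 0); move: cls; rewrite lo => /esym lon.
- have hb0 : inbox (-(v j).1) (v j) by split; lra.
  have [b1 b2 b3 b4] := box_later _ _ _ (ltnW jn) (ltnW nk) hb0.
  have h2 : (v j).2 < (v n).2.
    by case/orP: hC => // h; exfalso; lra.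
  move: HT; case: ifP => ha.
    by rewrite (ltW h2) lon andbT; case/andP; split; lra.
  move/negbT: ha; rewrite -leNgt => ha.
  case: ifP => hb'; first lra.
  move=> _; lra.
- move/negbT: lo; rewrite -ltNge => lo.
  move/negbT: lon; rewrite -ltNge => lon.
  have hb0 : inbox ((v j).2) (v j) by split; lra.
  have [b1 b2 b3 b4] := box_later _ _ _ (ltnW jn) (ltnW nk) hb0.
  have h1 : (v n).1 < (v j).1.
    by case/orP: hC => // h; exfalso; lra.
  move: HT; case: ifP => ha; first lra.
  rewrite lo (ltW h1) b4 (ltW lon) /=; done.
Qed.


Lemma key_pos j n : (j < n)%N -> (n < k)%N -> clean P (v j) -> ~~ negs (v j) ->
  ((v j).1 + (v j).2 <= 0) = ((v n).1 + (v n).2 <= 0) ->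
  (v n).1 - (v n).2 <= (v j.+1).1 - (v j.+1).2.
Proof.
move=> jn nk cj nj cls.
have jk : (j < k)%N by lia.
have [_ _ _] := vstep j jk; rewrite cj (negbTE nj) => -[[y0 x0] hx hy hb hmin].
have zP := vP n (ltnW nk).
have zne : v n != v j by rewrite eq_sym vdistinct // ltnW.
case: (boolP (inC 2 (v j) (v n))) => hC; first exact: hmin.
move: hC; rewrite /inC negb_and -!ltNge => hC.
have HT := allP cj _ zP; rewrite (negbTE zne) implybF /inT in HT.
case lo: ((v j).1 + (v j).2 <= 0); move: cls; rewrite lo => /esym lon.
- have hb0 : inbox (-(v j).2) (v j) by split; lra.
  have [b1 b2 b3 b4] := box_later _ _ _ (ltnW jn) (ltnW nk) hb0.
  have h1 : (v j).1 < (v n).1.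
    by case/orP: hC => // h; exfalso; lra.
  move: HT; case: ifP => ha.
    by rewrite (ltW h1) lon andbT; case/andP; split; lra.
  move/negbT: ha; rewrite -leNgt => ha.
  case: ifP => hb'; first lra.
  move=> _; lra.
- move/negbT: lo; rewrite -ltNge => lo.
  move/negbT: lon; rewrite -ltNge => lon.
  have hb0 : inbox ((v j).1) (v j) by split; lra.
  have [b1 b2 b3 b4] := box_later _ _ _ (ltnW jn) (ltnW nk) hb0.
  have h2 : (v n).2 < (v j).2.
    by case/orP: hC => // h; exfalso; lra.
  move: HT; case: ifP => ha; first lra.
  rewrite lo b2 (ltW h2) (ltW lon) /=; done.
Qed.


Lemma chain (n : nat) (Q : nat -> bool) (l r : nat -> R) (L U : R) : L <= U ->
  (forall j, (j < n)%N -> Q j -> [/\ L <= l j, l j <= r j & r j <= U]) ->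
  (forall j m, (j < m)%N -> (m < n)%N -> Q j -> Q m -> r j <= l m) ->
  \sum_(j < n | Q j) (r j - l j) <= U - L.
Proof.
move=> LU H1 H2.
have K : forall m, (m <= n)%N -> exists F, [/\ L <= F, F <= U,
    \sum_(j < m | Q j) (r j - l j) <= F - L &
    forall i, (m <= i < n)%N -> Q i -> F <= l i].
  elim=> [|m IH] mn.
    exists L; split => //; first by rewrite big_ord0 subrr.
    by move=> i /andP[_ iN] Qi; case: (H1 i iN Qi).
  have [F [F1 F2 F3 F4]] := IH (ltnW mn).
  rewrite big_mkcond big_ord_recr /= -big_mkcond /=.
  case Qm: (Q m).
  + have [a1 a2 a3] := H1 m mn Qm.
    have fm : F <= l m by apply: F4 => //; rewrite leqnn mn.
    exists (r m); split; [lra | lra | lra | ].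
    by move=> i /andP [mi iN] Qi; exact: H2 m i mi iN Qm Qi.
  + exists F; split => //; first by rewrite addr0.
    by move=> i /andP [mi iN]; apply: F4; rewrite iN andbT ltnW.
have [F [_ F2 F3 _]] := K n (leqnn n).
lra.
Qed.


Lemma neg_bound (Q : nat -> bool) rr : 0 <= rr ->
  (forall j, (j < k)%N -> Q j -> [/\ clean P (v j), negs (v j) & inbox rr (v j)]) ->
  (forall j n, (j < n)%N -> (n < k)%N -> Q j -> Q n ->
     ((v j).1 + (v j).2 <= 0) = ((v n).1 + (v n).2 <= 0)) ->
  \sum_(j < k | Q j) L1 (bar (v j)) (bar (v j.+1)) <= 2 * rr.
Proof.
move=> r0 HQ Hc.
rewrite (eq_bigr (fun j : 'I_k => ((v j.+1).1 - (v j.+1).2) - ((v j).1 - (v j).2))); last first.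
  move=> j Qj; have [cj nj _] := HQ j (ltn_ord j) Qj.
  have [_ _ _] := vstep j (ltn_ord j); rewrite cj nj => -[[x0 y0] hx hy hb _].
  rewrite /L1 /bar /=.
  have e1 : ((v j).1 - (v j).2) / 2 - ((v j.+1).1 - (v j.+1).2) / 2 <= 0 by lra.
  have e2 : 0 <= ((v j).2 - (v j).1) / 2 - ((v j.+1).2 - (v j.+1).1) / 2 by lra.
  rewrite (ler0_norm e1) (ger0_norm e2); lra.
have := @chain k Q (fun j => (v j).1 - (v j).2) (fun j => (v j.+1).1 - (v j.+1).2) (-(2 * rr)) 0.
rewrite sub0r opprK; apply.
- lra.
- move=> j jk Qj; have [cj nj [b1 b2 b3 b4]] := HQ j jk Qj.
  have [_ _ _] := vstep j jk; rewrite cj nj => -[[x0 y0] hx hy hb _].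
  split; lra.
- move=> j m jm mk Qj Qm; have [cj nj _] := HQ j (ltn_trans jm mk) Qj.
  by apply: key_neg => //; apply: Hc.
Qed.

Lemma pos_bound (Q : nat -> bool) rr : 0 <= rr ->
  (forall j, (j < k)%N -> Q j -> [/\ clean P (v j), ~~ negs (v j) & inbox rr (v j)]) ->
  (forall j n, (j < n)%N -> (n < k)%N -> Q j -> Q n ->
     ((v j).1 + (v j).2 <= 0) = ((v n).1 + (v n).2 <= 0)) ->
  \sum_(j < k | Q j) L1 (bar (v j)) (bar (v j.+1)) <= 2 * rr.
Proof.
move=> r0 HQ Hc.
rewrite (eq_bigr (fun j : 'I_k => (- ((v j.+1).1 - (v j.+1).2)) - (- ((v j).1 - (v j).2)))); last first.
  move=> j Qj; have [cj nj _] := HQ j (ltn_ord j) Qj.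
  have [_ _ _] := vstep j (ltn_ord j); rewrite cj (negbTE nj) => -[[x0 y0] hx hy hb _].
  rewrite /L1 /bar /=.
  have e1 : 0 <= ((v j).1 - (v j).2) / 2 - ((v j.+1).1 - (v j.+1).2) / 2 by lra.
  have e2 : ((v j).2 - (v j).1) / 2 - ((v j.+1).2 - (v j.+1).1) / 2 <= 0 by lra.
  rewrite (ger0_norm e1) (ler0_norm e2); lra.
have := @chain k Q (fun j => - ((v j).1 - (v j).2)) (fun j => - ((v j.+1).1 - (v j.+1).2)) (-(2 * rr)) 0.
rewrite sub0r opprK; apply.
- lra.
- move=> j jk Qj; have [cj nj [b1 b2 b3 b4]] := HQ j jk Qj.
  have [_ _ _] := vstep j jk; rewrite cj (negbTE nj) => -[[x0 y0] hx hy hb _].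
  split; lra.
- move=> j m jm mk Qj Qm; have [cj nj _] := HQ j (ltn_trans jm mk) Qj.
  rewrite lerN2; by apply: key_pos => //; apply: Hc.
Qed.


Lemma main_bound : (v 0%N).1 <= 0 -> 0 <= (v 0%N).2 -> (v 0%N).1 + (v 0%N).2 < 0 ->
  \sum_(j < k | clean P (v j)) L1 (bar (v j)) (bar (v j.+1))
    <= 4 * L1 (vproj (v (find (fun j => clean P (v j)) (iota 0 k)))) (0, 0).
Proof.
move=> Hs1 Hs2 Hs3.
set j1 := find _ _.
have j1k : (j1 <= k)%N by rewrite (leq_trans (find_size _ _)) // size_iota.
have before : forall i, (i < j1)%N -> ~~ clean P (v i).
  move=> i ij; have := before_find 0%N ij; rewrite nth_iota ?add0n; last lia.
  by move=> ->.
have after : forall j, (j < k)%N -> clean P (v j) -> (j1 <= j)%N.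
  move=> j jk cj; rewrite leqNgt; apply/negP => h.
  by move: (before j h); rewrite cj.
have reg : forall n, (n <= j1)%N ->
    [/\ (v n).1 <= 0, 0 <= (v n).2 & (v n).1 + (v n).2 <= 0].
  elim=> [|n IH] nj; first by split; lra.
  have nk : (n < k)%N by lia.
  have [a1 a2 a3] := IH (ltnW nj).
  have [_ _ _] := vstep n nk; rewrite (negbTE (before n nj)).
  by case=> [[b1 b2 b3 b4]|[b1 b2 b3 b4]]; [split; lra | lra].
have [r1 r2 r3] := reg j1 (leqnn _).
set rr := - (v j1).1.
have rr0 : 0 <= rr by rewrite /rr; lra.
have box1 : forall j, (j < k)%N -> clean P (v j) -> inbox rr (v j).
  move=> j jk cj; apply: (box_later j1) => //; first exact: after.
    exact: ltnW.
  by rewrite /rr; split; lra.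
have RHS : 4 * L1 (vproj (v j1)) (0, 0) = 8 * rr.
  rewrite /L1 /vproj /= !subr0 normrN ler0_norm // /rr; lra.
rewrite RHS.
rewrite (bigID (fun j : 'I_k => negs (v j))) /=.
rewrite (bigID (fun j : 'I_k => (v j).1 + (v j).2 <= 0)) /=.
rewrite [X in _ + X <= _](bigID (fun j : 'I_k => (v j).1 + (v j).2 <= 0)) /=.
have h1 := @neg_bound (fun j => clean P (v j) && negs (v j) && ((v j).1 + (v j).2 <= 0)) rr rr0.
have h2 := @neg_bound (fun j => clean P (v j) && negs (v j) && ~~ ((v j).1 + (v j).2 <= 0)) rr rr0.
have h3 := @pos_bound (fun j => clean P (v j) && ~~ negs (v j) && ((v j).1 + (v j).2 <= 0)) rr rr0.
have h4 := @pos_bound (fun j => clean P (v j) && ~~ negs (v j) && ~~ ((v j).1 + (v j).2 <= 0)) rr rr0.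
have H1 : \sum_(j < k | clean P (v j) && negs (v j) && ((v j).1 + (v j).2 <= 0))
    L1 (bar (v j)) (bar (v j.+1)) <= 2 * rr.
  apply: h1.
  - by move=> j jk /andP [/andP [cj nj] _]; split => //; exact: box1.
  - by move=> j n _ _ /andP [_ a] /andP [_ b]; rewrite a b.
have H2 : \sum_(j < k | clean P (v j) && negs (v j) && ~~ ((v j).1 + (v j).2 <= 0))
    L1 (bar (v j)) (bar (v j.+1)) <= 2 * rr.
  apply: h2.
  - by move=> j jk /andP [/andP [cj nj] _]; split => //; exact: box1.
  - by move=> j n _ _ /andP [_ a] /andP [_ b]; rewrite (negbTE a) (negbTE b).
have H3 : \sum_(j < k | clean P (v j) && ~~ negs (v j) && ((v j).1 + (v j).2 <= 0))
    L1 (bar (v j)) (bar (v j.+1)) <= 2 * rr.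
  apply: h3.
  - by move=> j jk /andP [/andP [cj nj] _]; split => //; exact: box1.
  - by move=> j n _ _ /andP [_ a] /andP [_ b]; rewrite a b.
have H4 : \sum_(j < k | clean P (v j) && ~~ negs (v j) && ~~ ((v j).1 + (v j).2 <= 0))
    L1 (bar (v j)) (bar (v j.+1)) <= 2 * rr.
  apply: h4.
  - by move=> j jk /andP [/andP [cj nj] _]; split => //; exact: box1.
  - by move=> j n _ _ /andP [_ a] /andP [_ b]; rewrite (negbTE a) (negbTE b).
apply: le_trans (lerD (lerD H1 H2) (lerD H3 H4)) _.
lra.
Qed.

End Proof.

Theorem corollary2 (R : realFieldType) (P : seq (R * R)) (s t : R * R)
    (nb : R * R -> nat -> R * R) (k : nat) (v : nat -> R * R) :
  s \in P -> t \in P -> t = (0, 0) ->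
  s.1 <= 0 -> 0 <= s.2 -> s.1 + s.2 < 0 ->
  theta4_graph P nb ->
  v 0%N = s -> v k = t ->
  (forall j, (j < k)%N -> v j != t) ->
  (forall j, (j < k)%N -> alg_step P nb t (v j) (v j.+1)) ->
  let p1 := v (find (fun j => clean P (v j)) (iota 0 k)) in
  \sum_(j < k | clean P (v j)) L1 (bar (v j)) (bar (v j.+1))
    <= 4 * L1 (vproj p1) t.
Proof.
move=> sP tP tE; subst t; move=> s1 s2 s3 Hg v0 Hk Hne Hst; cbv zeta.
have sP0 : v 0%N \in P by rewrite v0.
exact: (@main_bound R P nb tP Hg k v sP0 Hk Hne Hst (ltac:(by rewrite v0)) (ltac:(by rewrite v0)) (ltac:(by rewrite v0))).
Qed.
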